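(* Let $y$ be the solution of the problem $\varepsilon^2 y''(x)=f(x,y)$ on $(0,1)$, $y(0)=y(1)=0$, with $f$ and the Shishkin mesh $\{x_i\}_{i=0}^N$ as described in the context, and let $F$ be the discrete operator defined in the context. Assume that $\varepsilon\leqslant C_0/N$ for some constant $C_0>0$. Then there is a constant $C>0$ independent of $N$ and $\varepsilon$ such that $$|(Fy)_{N/4}|\leqslant\frac{C}{N},$$ where $(Fy)_{N/4}$ is the component with index $N/4$ (corresponding to the mesh point $x_{N/4}=\lambda$) of $F$ applied to the vector $(y(x_0),\ldots,y(x_N))^T$.
   Context: Problem: $\varepsilon^2y''(x)=f(x,y)$ on $(0,1)$, $y(0)=y(1)=0$, where $\varepsilon>0$ is a small parameter, $f\in C^k([0,1]\times\mathbb{R})$ for some $k\geq 2$, and $f_y=\partial f/\partial y\geq m>0$ on $[0,1]\times\mathbb{R}$ for a constant $m$; this problem has a unique solution $y$. Shishkin mesh: $N$ is a positive integer divisible by 4, $\lambda=\min\{1/4,\,2\varepsilon\ln N/\sqrt{m}\}$, and it is assumed that $\lambda=2\varepsilon\ln N/\sqrt{m}$. The mesh $0=x_0<x_1<\cdots<x_N=1$ is equidistant on each of $[0,\lambda]$ (with $N/4$ subintervals), $[\lambda,1-\lambda]$ (with $N/2$ subintervals) and $[1-\lambda,1]$ (with $N/4$ subintervals); thus $x_{N/4}=\lambda$, $x_{3N/4}=1-\lambda$, subintervals in $[0,\lambda]\cup[1-\lambda,1]$ have length $4\lambda/N$ and those in $[\lambda,1-\lambda]$ have length $2(1-2\lambda)/N$.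 Scheme: $\gamma$ is a constant with $\gamma\geq f_y$, and $\beta=\sqrt{\gamma}/\varepsilon$. For $i=1,\ldots,N$ let $\ell_i=x_i-x_{i-1}$, $d_i=\beta/\tanh(\beta\ell_i)$, $a_i=\beta/\sinh(\beta\ell_i)$, $\Delta d_i=d_i-a_i$. For $v=(v_0,\ldots,v_N)^T\in\mathbb{R}^{N+1}$ define $Fv\in\mathbb{R}^{N+1}$ by $(Fv)_0=v_0$, $(Fv)_N=v_N$ and, for $i=1,\ldots,N-1$, $$(Fv)_i=\frac{\gamma}{\Delta d_i+\Delta d_{i+1}}\Big[\tfrac{a_i+d_i}{2}v_{i-1}-\big(\tfrac{a_i+d_i}{2}+\tfrac{a_{i+1}+d_{i+1}}{2}\big)v_i+\tfrac{a_{i+1}+d_{i+1}}{2}v_{i+1}-\tfrac{\Delta d_i}{\gamma}f\big(\tfrac{x_{i-1}+x_i}{2},\tfrac{v_{i-1}+v_i}{2}\big)-\tfrac{\Delta d_{i+1}}{\gamma}f\big(\tfrac{x_{i}+x_{i+1}}{2},\tfrac{v_{i}+v_{i+1}}{2}\big)\Big].$$ *)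

(* Defs.v *)
From Stdlib Require Import Reals Lra Lia.
From Coquelicot Require Import Coquelicot.
Open Scope R_scope.

Definition strip (p : R * R) : Prop := 0 <= fst p <= 1.

Definition cont_on_strip (g : R -> R -> R) : Prop :=
  forall x v, 0 <= x <= 1 ->
    filterlim (fun p : R * R => g (fst p) (snd p))
              (within strip (locally (x, v))) (locally (g x v)).

(** f ∈ C^2([0,1] x R) with first partial derivative in the second variable fy:
    all partial derivatives up to order 2 exist on the interior (0,1) x R
    (in y also on the boundary lines, y being an open direction) and extend
    continuously to [0,1] x R. *)
Definition C2_strip (f fy : R -> R -> R) : Prop :=
  exists fx fxx fxy fyx fyy : R -> R -> R,
    cont_on_strip f /\ cont_on_strip fx /\ cont_on_strip fy /\
    cont_on_strip fxx /\ cont_on_strip fxy /\ cont_on_strip fyx /\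
    cont_on_strip fyy /\
    (forall x v, 0 < x < 1 ->
       is_derive (fun t => f t v) x (fx x v) /\
       is_derive (fun t => fx t v) x (fxx x v) /\
       is_derive (fun t => fy t v) x (fyx x v)) /\
    (forall x v, 0 <= x <= 1 ->
       is_derive (fun t => f x t) v (fy x v) /\
       is_derive (fun t => fx x t) v (fxy x v) /\
       is_derive (fun t => fy x t) v (fyy x v)).

Definition is_solution (eps : R) (f : R -> R -> R) (y : R -> R) : Prop :=
  y 0 = 0 /\ y 1 = 0 /\
  filterlim y (at_right 0) (locally 0) /\
  filterlim y (at_left 1) (locally 0) /\
  exists y1 y2 : R -> R,
    forall x, 0 < x < 1 ->
      is_derive y x (y1 x) /\ is_derive y1 x (y2 x) /\
      eps ^ 2 * y2 x = f x (y x).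

Definition shishkin_lambda (eps m : R) (N : nat) : R :=
  Rmin (1 / 4) (2 * eps * ln (INR N) / sqrt m).

Definition shishkin_mesh (eps m : R) (N : nat) (i : nat) : R :=
  let lam := shishkin_lambda eps m N in
  if (i <=? N / 4)%nat then INR i * (4 * lam / INR N)
  else if (i <=? 3 * N / 4)%nat then
    lam + INR (i - N / 4) * (2 * (1 - 2 * lam) / INR N)
  else (1 - lam) + INR (i - 3 * N / 4) * (4 * lam / INR N).

Definition F_op (gamma eps : R) (f : R -> R -> R) (xm : nat -> R) (N : nat)
    (v : nat -> R) (i : nat) : R :=
  let beta := sqrt gamma / eps in
  let l := fun j : nat => xm j - xm (j - 1)%nat in
  let d := fun j : nat => beta / tanh (beta * l j) in
  let a := fun j : nat => beta / sinh (beta * l j) in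
  let Dd := fun j : nat => d j - a j in
  if (i =? 0)%nat then v 0%nat
  else if (i =? N)%nat then v N
  else
    gamma / (Dd i + Dd (i + 1)%nat) *
    ( (a i + d i) / 2 * v (i - 1)%nat
      - ((a i + d i) / 2 + (a (i + 1)%nat + d (i + 1)%nat) / 2) * v i
      + (a (i + 1)%nat + d (i + 1)%nat) / 2 * v (i + 1)%nat
      - Dd i / gamma * f ((xm (i - 1)%nat + xm i) / 2) ((v (i - 1)%nat + v i) / 2)
      - Dd (i + 1)%nat / gamma
          * f ((xm i + xm (i + 1)%nat) / 2) ((v i + v (i + 1)%nat) / 2) ).

(* Main.v *)
Require Import Defs.
From Stdlib Require Import Reals Lra Lia Psatz ClassicalEpsilon Classical.
From Coquelicot Require Import Coquelicot.
Open Scope R_scope.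

Lemma cont_of_derive f x l : is_derive f x l -> continuity_pt f x.
Proof.
  intros H. apply continuity_pt_filterlim. apply (ex_derive_continuous f x).
  exists l; exact H.
Qed.

Lemma cpt_plus f g x : continuity_pt f x -> continuity_pt g x -> continuity_pt (fun t => f t + g t) x.
Proof. intros; exact (continuity_pt_plus f g x H H0). Qed.
Lemma cpt_minus f g x : continuity_pt f x -> continuity_pt g x -> continuity_pt (fun t => f t - g t) x.
Proof. intros; exact (continuity_pt_minus f g x H H0). Qed.
Lemma cpt_const c x : continuity_pt (fun _ => c) x.
Proof. apply continuity_pt_const. intros a b; reflexivity. Qed.
Lemma cpt_scal c f x : continuity_pt f x -> continuity_pt (fun t => c * f t) x.
Proof. intros; exact (continuity_pt_scal f c x H). Qed.
Lemma cpt_shift f d x : continuity_pt f (x + d) -> continuity_pt (fun t => f (t + d)) x.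
Proof.
  intros H. apply (continuity_pt_comp (fun t => t + d) f x); auto.
  apply cpt_plus. apply derivable_continuous_pt, derivable_pt_id. apply cpt_const.
Qed.
Lemma cpt_opp f x : continuity_pt f x -> continuity_pt (fun t => - f t) x.
Proof. intros; exact (continuity_pt_opp f x H). Qed.

Lemma der_plus (f g : R -> R) x a b : is_derive f x a -> is_derive g x b -> is_derive (fun t => f t + g t) x (a + b).
Proof. intros H1 H2; apply is_derive_Reals; apply is_derive_Reals in H1, H2.
  exact (derivable_pt_lim_plus f g x a b H1 H2). Qed.
Lemma der_minus (f g : R -> R) x a b : is_derive f x a -> is_derive g x b -> is_derive (fun t => f t - g t) x (a - b).
Proof. intros H1 H2; apply is_derive_Reals; apply is_derive_Reals in H1, H2.
  exact (derivable_pt_lim_minus f g x a b H1 H2). Qed.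
Lemma der_scal c (f : R -> R) x a : is_derive f x a -> is_derive (fun t => c * f t) x (c * a).
Proof. intros H1; apply is_derive_Reals; apply is_derive_Reals in H1.
  exact (derivable_pt_lim_scal f c x a H1). Qed.
Lemma der_const (c x : R) : @is_derive R_AbsRing R_NormedModule (fun _ : R => c) x 0.
Proof. apply is_derive_Reals. apply derivable_pt_lim_const. Qed.
Lemma der_opp (f : R -> R) x a : is_derive f x a -> is_derive (fun t => - f t) x (- a).
Proof. intros H1; apply is_derive_Reals; apply is_derive_Reals in H1.
  exact (derivable_pt_lim_opp f x a H1). Qed.
Lemma der_shift (f : R -> R) d x a : is_derive f (x + d) a -> is_derive (fun t => f (t + d)) x a.
Proof. intros H1; apply is_derive_Reals; apply is_derive_Reals in H1.
  replace a with (a * 1) by ring.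
  apply (derivable_pt_lim_comp (fun t => t + d) f x 1 a); auto.
  replace 1 with (1 + 0) by ring. apply (derivable_pt_lim_plus id (fun _ => d)).
  apply derivable_pt_lim_id. apply derivable_pt_lim_const. Qed.
Lemma is_derive_expl (a b x : R) :
  is_derive (fun t => exp (a * t + b)) x (a * exp (a * x + b)).
Proof. auto_derive; auto. ring. Qed.
Lemma mvt_open f df a b : a < b ->
  (forall x, a < x < b -> is_derive f x (df x)) ->
  (forall x, a <= x <= b -> continuity_pt f x) ->
  exists c, a < c < b /\ f b - f a = df c * (b - a).
Proof.
  intros Hab Hd Hc.
  assert (pr1 : forall c, a < c < b -> derivable_pt f c).
  { intros c Hc'. exists (df c). apply is_derive_Reals. now apply Hd. }
  assert (pr2 : forall c, a < c < b -> derivable_pt id c).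
  { intros c _. apply derivable_pt_id. }
  destruct (MVT f id a b pr1 pr2 Hab Hc) as [c [P HP]].
  { intros c _. apply derivable_continuous_pt, derivable_pt_id. }
  exists c; split; auto.
  rewrite (derive_pt_eq_0 f c (df c) (pr1 c P)) in HP.
  2: { apply is_derive_Reals; now apply Hd. }
  rewrite (derive_pt_eq_0 id c 1 (pr2 c P)) in HP.
  2: { apply derivable_pt_lim_id. }
  unfold id in HP. lra.
Qed.

Lemma locmax2 Z Z1 z2 a b c : a < c < b ->
  (forall x, a < x < b -> is_derive Z x (Z1 x)) ->
  is_derive Z1 c z2 ->
  (forall x, a < x < b -> Z x <= Z c) -> z2 <= 0.
Proof.
  intros Hc HZ HZ1 Hmax.
  assert (H0 : Z1 c = 0).
  { assert (pr : derivable_pt Z c).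
    { exists (Z1 c). apply is_derive_Reals. now apply HZ. }
    rewrite <- (derive_pt_eq_0 Z c (Z1 c) pr).
    2: { apply is_derive_Reals; now apply HZ. }
    apply (deriv_maximum Z a b c pr); try lra.
    intros x H1 H2; apply Hmax; lra. }
  destruct (Rle_or_lt z2 0) as [|Hpos]; auto. exfalso.
  apply is_derive_Reals in HZ1.
  destruct (HZ1 (z2/2) ltac:(lra)) as [del Hdel].
  set (t := Rmin (del/2) ((b - c)/2)).
  assert (Ht : 0 < t /\ t < del /\ c + t < b).
  { unfold t. destruct del as [d Hd]; simpl in *.
    split; [apply Rmin_glb_lt; lra|]. split.
    - apply Rle_lt_trans with (d/2); [apply Rmin_l|lra].
    - assert (Rmin (d/2) ((b-c)/2) <= (b-c)/2) by apply Rmin_r. lra. }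
  destruct (mvt_open Z Z1 c (c + t)) as [xi [Hxi Heq]]; try lra.
  { intros x Hx; apply HZ; lra. }
  { intros x Hx. destruct (Req_dec x c) as [->|Hne].
    - apply (cont_of_derive _ _ (Z1 c)); apply HZ; lra.
    - apply (cont_of_derive _ _ (Z1 x)); apply HZ; lra. }
  assert (Hpos1 : Z1 xi > 0).
  { assert (Hh : xi - c <> 0) by lra.
    assert (Hh2 : Rabs (xi - c) < del).
    { rewrite Rabs_right by lra. lra. }
    specialize (Hdel (xi - c) Hh Hh2).
    replace (c + (xi - c)) with xi in Hdel by ring.
    rewrite H0 in Hdel.
    apply Rabs_def2 in Hdel. destruct Hdel as [_ Hl].
    assert (Z1 xi / (xi - c) > 0) by lra.
    destruct (Rle_or_lt (Z1 xi) 0); auto.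
    exfalso. assert (Z1 xi / (xi - c) <= 0).
    { unfold Rdiv. apply Rmult_le_0_r; auto. left; apply Rinv_0_lt_compat; lra. }
    lra. }
  assert (Z (c + t) <= Z c) by (apply Hmax; lra).
  assert (Z1 xi * (c + t - c) > 0) by (apply Rmult_lt_0_compat; lra).
  lra.
Qed.

Lemma ballR (x : R) (e : R) (y : R) : @ball R_UniformSpace x e y <-> Rabs (y - x) < e.
Proof. reflexivity. Qed.

Lemma cont_strip_loc g u v : cont_on_strip g -> 0 <= u <= 1 ->
  exists d : posreal, forall x w, 0 <= x <= 1 -> Rabs (x - u) < d -> Rabs (w - v) < d ->
    Rabs (g x w - g u v) < 1.
Proof.
  intros H Hu. specialize (H u v Hu).
  apply filterlim_locally with (eps := mkposreal 1 Rlt_0_1) in H.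
  destruct H as [d Hd]. exists d. intros x w Hx H1 H2.
  specialize (Hd (x, w)). simpl in Hd. apply Hd.
  split; simpl; apply ballR; auto. unfold strip; simpl; auto.
Qed.

Lemma bounded_rect g : cont_on_strip g -> forall M, 0 <= M ->
  exists K, forall x w, 0 <= x <= 1 -> -M <= w <= M -> Rabs (g x w) <= K.
Proof.
  intros Hg M HM.
  assert (Hex : forall u v, exists d : posreal, 0 <= u <= 1 ->
     forall x w, 0 <= x <= 1 -> Rabs (x - u) < d -> Rabs (w - v) < d ->
       Rabs (g x w - g u v) < 1).
  { intros u v. destruct (Rle_dec 0 u) as [h1|h1]; [destruct (Rle_dec u 1) as [h2|h2]|].
    - destruct (cont_strip_loc g u v Hg (conj h1 h2)) as [d Hd]. exists d; auto.
    - exists (mkposreal 1 Rlt_0_1); intros; lra.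
    - exists (mkposreal 1 Rlt_0_1); intros; lra. }
  pose (D := fun u v => proj1_sig (constructive_indefinite_description _ (Hex u v))).
  assert (HD : forall u v, 0 <= u <= 1 ->
     forall x w, 0 <= x <= 1 -> Rabs (x - u) < D u v -> Rabs (w - v) < D u v ->
       Rabs (g x w - g u v) < 1).
  { intros u v. unfold D. destruct (constructive_indefinite_description _ (Hex u v)) as [d Hd].
    simpl. exact Hd. }
  assert (Dpos : forall u v, 0 < D u v / 2).
  { intros u v. pose proof (cond_pos (D u v)). lra. }
  clearbody D. pose (delta := fun u v => mkposreal _ (Dpos u v)).
  destruct (compactness_value_2d 0 1 (-M) M delta) as [d Hd].
  assert (Huc : forall x w x' w', 0 <= x <= 1 -> -M <= w <= M -> 0 <= x' <= 1 -> -M <= w' <= M ->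
     Rabs (x - x') < d -> Rabs (w - w') < d -> Rabs (g x w - g x' w') <= 2).
  { intros x w x' w' Hx Hw Hx' Hw' H1 H2.
    apply NNPP; intro Hn. apply (Hd x w Hx Hw). intros [u [v [Hu [Hv [Hxu [Hwv Hdd]]]]]].
    apply Hn. simpl in Hxu, Hwv, Hdd. pose proof (cond_pos (D u v)).
    assert (A1 : Rabs (g x w - g u v) < 1).
    { pose proof (cond_pos (D u v)). apply HD; auto; lra. }
    assert (A2 : Rabs (g x' w' - g u v) < 1).
    { apply HD; auto.
      - replace (x' - u) with ((x' - x) + (x - u)) by ring.
        eapply Rle_lt_trans; [apply Rabs_triang|]. rewrite Rabs_minus_sym in H1. lra.
      - replace (w' - v) with ((w' - w) + (w - v)) by ring.
        eapply Rle_lt_trans; [apply Rabs_triang|]. rewrite Rabs_minus_sym in H2. lra. }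
    replace (g x w - g x' w') with ((g x w - g u v) - (g x' w' - g u v)) by ring.
    eapply Rle_trans; [apply Rabs_triang|]. rewrite Rabs_Ropp. lra. }
  destruct (INR_unbounded ((1 + 2*M) / d + 1)) as [k Hk].
  pose proof (cond_pos d) as dpos.
  assert (Hk1 : 1 <= INR k).
  { assert (0 <= (1+2*M)/d) by (apply Rdiv_le_0_compat; lra). lra. }
  assert (Hkd : (1 + 2*M) < INR k * d).
  { assert ((1+2*M)/d < INR k) by lra.
    apply (Rmult_lt_compat_r d) in H; auto. unfold Rdiv in H.
    rewrite Rmult_assoc, Rinv_l in H; lra. }
  exists (Rabs (g 0 (-M)) + 2 * INR k).
  intros x w Hx Hw.
  assert (Hind : forall j, (j <= k)%nat ->
     Rabs (g (x * (INR j / INR k)) (-M + (w + M) * (INR j / INR k)) - g 0 (-M)) <= 2 * INR j).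
  { induction j as [|j IH]; intros Hj.
    - simpl. replace (0 / INR k) with 0 by (unfold Rdiv; ring).
      replace (x * 0) with 0 by ring. replace (-M + (w+M)*0) with (-M) by ring.
      unfold Rminus; rewrite Rplus_opp_r, Rabs_R0. lra.
    - assert (Hj' : (j <= k)%nat) by lia. specialize (IH Hj').
      rewrite S_INR.
      assert (Hjk : INR (S j) <= INR k) by (apply le_INR; lia).
      rewrite S_INR in Hjk.
      assert (Hj0 : 0 <= INR j) by apply pos_INR.
      set (t := INR j / INR k). set (t' := (INR j + 1) / INR k).
      assert (Ht : 0 <= t <= 1).
      { unfold t; split. apply Rdiv_le_0_compat; lra.
        apply (Rdiv_le_1 (INR j) (INR k)); lra. }
      assert (Ht' : 0 <= t' <= 1).
      { unfold t'; split. apply Rdiv_le_0_compat; lra.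
        apply (Rdiv_le_1 (INR j + 1) (INR k)); lra. }
      assert (Htt : t' - t = / INR k).
      { unfold t, t'. field. lra. }
      assert (Hinvk : (1 + 2 * M) * / INR k < d /\ 0 < / INR k).
      { split. 2: apply Rinv_0_lt_compat; lra.
        apply (Rmult_lt_reg_l (INR k)); [lra|].
        replace (INR k * ((1 + 2 * M) * / INR k)) with (1 + 2*M) by (field; lra). lra. }
      assert (Hstep : Rabs (g (x * t') (-M + (w + M) * t') - g (x * t) (-M + (w + M) * t)) <= 2).
      { apply Huc; try nra.
        - replace (x * t' - x * t) with (x * (t' - t)) by ring. rewrite Htt.
          rewrite Rabs_right by nra. nra.
        - replace (-M + (w + M) * t' - (-M + (w + M) * t)) with ((w + M) * (t' - t)) by ring.
          rewrite Htt. rewrite Rabs_right by nra. nra. }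
      replace (g (x * t') (-M + (w + M) * t') - g 0 (-M)) with
        ((g (x * t') (-M + (w + M) * t') - g (x * t) (-M + (w + M) * t)) +
         (g (x * t) (-M + (w + M) * t) - g 0 (-M))) by ring.
      eapply Rle_trans; [apply Rabs_triang|]. unfold t, t' in *. lra. }
  specialize (Hind k (Nat.le_refl k)).
  replace (INR k / INR k) with 1 in Hind by (field; lra).
  replace (x * 1) with x in Hind by ring. replace (-M + (w + M) * 1) with w in Hind by ring.
  replace (g x w) with ((g x w - g 0 (-M)) + g 0 (-M)) by ring.
  eapply Rle_trans; [apply Rabs_triang|]. lra.
Qed.

Lemma abs_le_inv a b : Rabs a <= b -> - b <= a <= b.
Proof. unfold Rabs; destruct (Rcase_abs a); intros; lra. Qed.
Definition ode_hyp (eps m : R) (Y Y1 Y2 : R -> R) (G : R -> R -> R) : Prop :=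
  (forall x, 0 <= x <= 1 -> continuity_pt Y x) /\
  (forall x, 0 < x < 1 -> is_derive Y x (Y1 x) /\ is_derive Y1 x (Y2 x) /\ eps^2 * Y2 x = G x (Y x)) /\
  (forall x u v, 0 <= x <= 1 -> v <= u -> m * (u - v) <= G x u - G x v).

Lemma neg_ode eps m Y Y1 Y2 G : ode_hyp eps m Y Y1 Y2 G ->
  ode_hyp eps m (fun x => - Y x) (fun x => - Y1 x) (fun x => - Y2 x) (fun x v => - G x (- v)).
Proof.
  intros [H1 [H2 H3]]. split; [|split].
  - intros x Hx; apply cpt_opp; auto.
  - intros x Hx. destruct (H2 x Hx) as [A [B C]]. split; [|split].
    + apply der_opp; auto.
    + apply der_opp; auto.
    + rewrite Ropp_involutive. rewrite <- C. ring.
  - intros x u v Hx Huv. specialize (H3 x (- v) (- u) Hx ltac:(lra)). lra.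
Qed.

Lemma maxprin eps m Y Y1 Y2 G Mf : ode_hyp eps m Y Y1 Y2 G -> 0 < m -> 0 < eps ->
  Y 0 = 0 -> Y 1 = 0 -> 0 <= Mf -> (forall x, 0 < x < 1 -> - Mf <= G x 0) ->
  forall x, 0 <= x <= 1 -> Y x <= Mf / m.
Proof.
  intros [Hc [Hd Hm]] Hm0 He Y0 Y1' HMf HG.
  destruct (continuity_ab_maj Y 0 1 ltac:(lra) Hc) as [c [Hmax Hcr]].
  intros x Hx.
  assert (0 <= Mf / m) by (apply Rdiv_le_0_compat; lra).
  destruct (Rle_or_lt (Y c) (Mf / m)) as [Hle|Hgt].
  { specialize (Hmax x Hx). lra. }
  exfalso.
  assert (Hci : 0 < c < 1).
  { destruct Hcr as [[Hc0|Hc0] [Hc1|Hc1]]; subst; try lra. }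
  destruct (Hd c Hci) as [_ [HY1 Heq]].
  assert (Hz : Y2 c <= 0).
  { apply (locmax2 Y Y1 (Y2 c) 0 1 c Hci); auto.
    - intros t Ht; apply (Hd t Ht).
    - intros t Ht; apply Hmax; lra. }
  assert (HYc : Mf < m * Y c).
  { apply (Rmult_lt_compat_l m) in Hgt; auto.
    replace (m * (Mf / m)) with Mf in Hgt by (field; lra). lra. }
  specialize (Hm c (Y c) 0 ltac:(lra) ltac:(lra)).
  specialize (HG c Hci).
  assert (eps ^ 2 * Y2 c <= 0).
  { assert (0 < eps ^ 2) by (apply pow_lt; lra). nra. }
  lra.
Qed.

Lemma dq_bound eps m Y Y1 Y2 G M0 Kx : ode_hyp eps m Y Y1 Y2 G -> 0 < m -> 0 < eps ->
  (forall x, 0 <= x <= 1 -> Rabs (Y x) <= M0) -> 0 <= Kx ->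
  (forall x1 x2 v, 0 < x1 < 1 -> 0 < x2 < 1 -> Rabs v <= M0 ->
      Rabs (G x1 v - G x2 v) <= Kx * Rabs (x1 - x2)) ->
  forall d x, 0 < d < 1 -> 0 <= x <= 1 - d ->
  Y (x + d) - Y x <= d * (Kx / m) + 2 * M0 *
     (exp (- (sqrt m / eps) * x + 0) + exp ((sqrt m / eps) * x + - (sqrt m / eps) * (1 - d))).
Proof.
  intros [Hc [Hd Hm]] Hm0 He HM0 HKx HL d x Hdd Hx.
  set (k := sqrt m / eps).
  assert (Hk2 : eps ^ 2 * (k * k) = m).
  { unfold k. replace (eps ^ 2 * (sqrt m / eps * (sqrt m / eps))) with (sqrt m * sqrt m)
      by (field; lra). apply sqrt_sqrt; lra. }
  assert (HM0p : 0 <= M0) by (specialize (HM0 0 ltac:(lra)); pose proof (Rabs_pos (Y 0)); lra).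
  set (e1 := fun t => exp (- k * t + 0)).
  set (e2 := fun t => exp (k * t + - k * (1 - d))).
  set (z := fun t => Y (t + d) - Y t - d * (Kx / m) - 2 * M0 * (e1 t + e2 t)).
  assert (Hcz : forall t, 0 <= t <= 1 - d -> continuity_pt z t).
  { intros t Ht. unfold z. apply cpt_minus. apply cpt_minus. apply cpt_minus.
    - apply cpt_shift. apply Hc; lra.
    - apply Hc; lra.
    - apply cpt_const.
    - apply cpt_scal. apply cpt_plus.
      + apply (cont_of_derive _ _ _ (is_derive_expl (-k) 0 t)).
      + apply (cont_of_derive _ _ _ (is_derive_expl k (-k * (1 - d)) t)). }
  destruct (continuity_ab_maj z 0 (1 - d) ltac:(lra) Hcz) as [c [Hmax Hcr]].
  cut (z x <= 0).
  { unfold z, e1, e2. intros; lra. }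
  apply Rle_trans with (z c); [apply Hmax; lra|].
  destruct (Rle_or_lt (z c) 0) as [|Hgt]; auto. exfalso.
  assert (He1 : forall t, 0 < e1 t) by (intros; apply exp_pos).
  assert (He2 : forall t, 0 < e2 t) by (intros; apply exp_pos).
  assert (Hz0 : z 0 <= 0).
  { unfold z. unfold e1. replace (- k * 0 + 0) with 0 by ring. rewrite exp_0.
    specialize (He2 0).
    assert (Rabs (Y (0 + d)) <= M0) by (apply HM0; lra).
    assert (Rabs (Y 0) <= M0) by (apply HM0; lra).
    apply abs_le_inv in H; apply abs_le_inv in H0.
    assert (0 <= d * (Kx / m)) by (apply Rmult_le_pos; [lra|apply Rdiv_le_0_compat; lra]).
    nra. }
  assert (Hz1 : z (1 - d) <= 0).
  { unfold z. unfold e2. replace (k * (1 - d) + - k * (1 - d)) with 0 by ring. rewrite exp_0.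
    specialize (He1 (1 - d)).
    assert (Rabs (Y (1 - d + d)) <= M0) by (apply HM0; lra).
    assert (Rabs (Y (1 - d)) <= M0) by (apply HM0; lra).
    apply abs_le_inv in H; apply abs_le_inv in H0.
    assert (0 <= d * (Kx / m)) by (apply Rmult_le_pos; [lra|apply Rdiv_le_0_compat; lra]).
    nra. }
  assert (Hci : 0 < c < 1 - d).
  { destruct Hcr as [[Hc0|Hc0] [Hc1|Hc1]]; try lra; exfalso;
    [rewrite Hc1 in Hgt|rewrite <- Hc0 in Hgt]; lra. }
  set (z1 := fun t => Y1 (t + d) - Y1 t - 2 * M0 * (- k * e1 t + k * e2 t)).
  assert (Hdz : forall t, 0 < t < 1 - d -> is_derive z t (z1 t)).
  { intros t Ht. unfold z, z1.
    replace (Y1 (t + d) - Y1 t - 2 * M0 * (- k * e1 t + k * e2 t)) with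
      (Y1 (t + d) - Y1 t - 0 - 2 * M0 * (- k * e1 t + k * e2 t)) by ring.
    apply der_minus. apply der_minus. apply der_minus.
    - apply der_shift. apply Hd; lra.
    - apply Hd; lra.
    - apply der_const.
    - apply der_scal. apply der_plus.
      + apply is_derive_expl.
      + apply is_derive_expl. }
  set (z2 := Y2 (c + d) - Y2 c - 2 * M0 * (- k * (- k * e1 c) + k * (k * e2 c))).
  assert (Hdz1 : is_derive z1 c z2).
  { unfold z1, z2.
    apply der_minus. apply der_minus.
    - apply der_shift. apply Hd; lra.
    - apply Hd; lra.
    - apply der_scal. apply der_plus.
      + apply der_scal. apply is_derive_expl.
      + apply der_scal. apply is_derive_expl. }
  assert (Hz2 : z2 <= 0).
  { apply (locmax2 z z1 z2 0 (1 - d) c Hci Hdz Hdz1).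
    intros t Ht; apply Hmax; lra. }
  destruct (Hd (c + d) ltac:(lra)) as [_ [_ Ea]].
  destruct (Hd c ltac:(lra)) as [_ [_ Eb]].
  assert (Hdiff : Y (c + d) - Y c > d * (Kx / m) + 2 * M0 * (e1 c + e2 c)).
  { unfold z in Hgt. lra. }
  assert (HLip : Rabs (G (c + d) (Y (c + d)) - G c (Y (c + d))) <= Kx * Rabs (c + d - c)).
  { apply HL; try lra. apply HM0; lra. }
  replace (c + d - c) with d in HLip by ring. rewrite (Rabs_right d) in HLip by lra.
  apply abs_le_inv in HLip.
  assert (Hpos : 0 <= d * (Kx / m) + 2 * M0 * (e1 c + e2 c)).
  { specialize (He1 c); specialize (He2 c).
    assert (0 <= d * (Kx / m)) by (apply Rmult_le_pos; [lra|apply Rdiv_le_0_compat; lra]).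
    nra. }
  specialize (Hm c (Y (c + d)) (Y c) ltac:(lra) ltac:(lra)).
  assert (Hmd : m * (d * (Kx / m)) = d * Kx) by (field; lra).
  assert (Heps : eps ^ 2 * z2 = G (c + d) (Y (c + d)) - G c (Y c) - 2 * M0 * m * (e1 c + e2 c)).
  { unfold z2. rewrite <- Ea, <- Eb.
    replace (- k * (- k * e1 c) + k * (k * e2 c)) with ((k * k) * (e1 c + e2 c)) by ring.
    rewrite <- Hk2. ring. }
  assert (0 < eps ^ 2) by (apply pow_lt; lra).
  assert (eps ^ 2 * z2 <= 0) by nra.
  assert (m * (Y (c + d) - Y c) > m * (d * (Kx / m) + 2 * M0 * (e1 c + e2 c))).
  { apply Rmult_lt_compat_l; auto. }
  nra.
Qed.

Lemma dq_abs eps m Y Y1 Y2 G M0 Kx : ode_hyp eps m Y Y1 Y2 G -> 0 < m -> 0 < eps ->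
  (forall x, 0 <= x <= 1 -> Rabs (Y x) <= M0) -> 0 <= Kx ->
  (forall x1 x2 v, 0 < x1 < 1 -> 0 < x2 < 1 -> Rabs v <= M0 ->
      Rabs (G x1 v - G x2 v) <= Kx * Rabs (x1 - x2)) ->
  forall d x, 0 < d < 1 -> 0 <= x <= 1 - d ->
  Rabs (Y (x + d) - Y x) <= d * (Kx / m) + 2 * M0 *
     (exp (- (sqrt m / eps) * x + 0) + exp ((sqrt m / eps) * x + - (sqrt m / eps) * (1 - d))).
Proof.
  intros Ho Hm He HM HK HL d x Hd Hx.
  apply Rabs_le. split.
  - assert (H := dq_bound eps m _ _ _ _ M0 Kx (neg_ode _ _ _ _ _ _ Ho) Hm He).
    simpl in H.
    assert (H' : - Y (x + d) - - Y x <= d * (Kx / m) + 2 * M0 *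
     (exp (- (sqrt m / eps) * x + 0) + exp ((sqrt m / eps) * x + - (sqrt m / eps) * (1 - d)))).
    { apply H; auto.
      - intros t Ht. rewrite Rabs_Ropp. auto.
      - intros x1 x2 v H1 H2 H3.
        replace (- G x1 (- v) - - G x2 (- v)) with (- (G x1 (- v) - G x2 (- v))) by ring.
        rewrite Rabs_Ropp. apply HL; auto. rewrite Rabs_Ropp; auto. }
    lra.
  - apply (dq_bound eps m Y Y1 Y2 G M0 Kx); auto.
Qed.

Lemma sec_diff eps m Y Y1 Y2 G s x : ode_hyp eps m Y Y1 Y2 G -> 0 < s -> 0 <= x -> x + 2 * s <= 1 ->
  exists z, x < z < x + 2 * s /\ Y (x + 2 * s) - 2 * Y (x + s) + Y x = s ^ 2 * Y2 z.
Proof.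
  intros [Hc [Hd _]] Hs Hx Hx2.
  destruct (mvt_open (fun t => Y (t + s) - Y t) (fun t => Y1 (t + s) - Y1 t) x (x + s))
    as [eta [Heta Heq]]; try lra.
  { intros t Ht. apply der_minus. apply der_shift. apply Hd; lra. apply Hd; lra. }
  { intros t Ht. apply cpt_minus. apply cpt_shift. apply Hc; lra. apply Hc; lra. }
  destruct (mvt_open Y1 Y2 eta (eta + s)) as [z [Hz Heq2]]; try lra.
  { intros t Ht. apply Hd; lra. }
  { intros t Ht. apply (cont_of_derive _ _ (Y2 t)). apply Hd; lra. }
  exists z. split; [lra|].
  replace (x + 2 * s) with (x + s + s) by ring.
  replace (x + s - x) with s in Heq by ring. replace (eta + s - eta) with s in Heq2 by ring.
  rewrite Heq2 in Heq. simpl. nra.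
Qed.
Definition clamp (t : R) := Rmax 0 (Rmin 1 t).

Lemma clamp_id t : 0 <= t <= 1 -> clamp t = t.
Proof. intros. unfold clamp. rewrite Rmin_right by lra. rewrite Rmax_right; lra. Qed.

Lemma clamp_le0 t : t <= 0 -> clamp t = 0.
Proof. intros. unfold clamp. rewrite Rmin_right by lra. rewrite Rmax_left; lra. Qed.

Lemma clamp_ge1 t : 1 <= t -> clamp t = 1.
Proof. intros. unfold clamp. rewrite Rmin_left by lra. rewrite Rmax_right; lra. Qed.

Lemma sol_ode eps m f y : is_solution eps f y -> 0 < m ->
  (forall x u v, 0 <= x <= 1 -> v <= u -> m * (u - v) <= f x u - f x v) ->
  exists y1 y2, ode_hyp eps m (fun t => y (clamp t)) y1 y2 f /\
    (forall x, 0 < x < 1 -> eps ^ 2 * y2 x = f x (y x)).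
Proof.
  intros [H0 [H1 [Hl0 [Hl1 [y1 [y2 Hd]]]]]] Hm Hmono.
  assert (Hloc : forall x, 0 < x < 1 -> locally x (fun t => y t = y (clamp t))).
  { intros x Hx. assert (Hp : 0 < Rmin x (1 - x)) by (apply Rmin_glb_lt; lra).
    exists (mkposreal _ Hp). intros t Ht. change (Rabs (t - x) < Rmin x (1 - x)) in Ht.
    assert (Rmin x (1 - x) <= x) by apply Rmin_l.
    assert (Rmin x (1 - x) <= 1 - x) by apply Rmin_r.
    apply Rabs_def2 in Ht. rewrite clamp_id; auto. lra. }
  exists y1, y2. split; [split; [|split]|].
  - intros x Hx.
    destruct (Req_dec x 0) as [->|Hx0]; [|destruct (Req_dec x 1) as [->|Hx1]].
    + apply continuity_pt_filterlim. apply filterlim_locally. intros e.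
      apply filterlim_locally with (eps := e) in Hl0.
      destruct Hl0 as [d Hd0].
      assert (Hp : 0 < Rmin d 1) by (apply Rmin_glb_lt; [apply cond_pos|lra]).
      exists (mkposreal _ Hp). intros t Ht. change (Rabs (t - 0) < Rmin d 1) in Ht.
      assert (Rmin d 1 <= d) by apply Rmin_l. assert (Rmin d 1 <= 1) by apply Rmin_r.
      rewrite (clamp_id 0) by lra. rewrite H0.
      destruct (Rle_or_lt t 0) as [Ht0|Ht0].
      * rewrite clamp_le0 by auto. rewrite H0. apply ballR. unfold Rminus. rewrite Rplus_opp_r, Rabs_R0. apply cond_pos.
      * rewrite clamp_id. 2: { apply Rabs_def2 in Ht. lra. }
        apply Hd0; auto. apply ballR. apply Rabs_def2 in Ht. apply Rabs_def1; lra.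
    + apply continuity_pt_filterlim. apply filterlim_locally. intros e.
      apply filterlim_locally with (eps := e) in Hl1.
      destruct Hl1 as [d Hd0].
      assert (Hp : 0 < Rmin d 1) by (apply Rmin_glb_lt; [apply cond_pos|lra]).
      exists (mkposreal _ Hp). intros t Ht. change (Rabs (t - 1) < Rmin d 1) in Ht.
      assert (Rmin d 1 <= d) by apply Rmin_l. assert (Rmin d 1 <= 1) by apply Rmin_r.
      rewrite (clamp_id 1) by lra. rewrite H1.
      destruct (Rle_or_lt 1 t) as [Ht0|Ht0].
      * rewrite clamp_ge1 by auto. rewrite H1. apply ballR. unfold Rminus. rewrite Rplus_opp_r, Rabs_R0. apply cond_pos.
      * rewrite clamp_id. 2: { apply Rabs_def2 in Ht. lra. }
        apply Hd0; auto. apply ballR. apply Rabs_def2 in Ht. apply Rabs_def1; lra.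
    + apply (cont_of_derive _ _ (y1 x)). apply (is_derive_ext_loc y). apply Hloc; lra.
      apply Hd; lra.
  - intros x Hx. destruct (Hd x Hx) as [A [B C]]. split; [|split]; auto.
    + apply (is_derive_ext_loc y). apply Hloc; lra. auto.
    + rewrite clamp_id by lra. auto.
  - auto.
  - intros x Hx. apply Hd; auto.
Qed.
Lemma f_mono (f fy : R -> R -> R) m g :
  (forall x v, 0 <= x <= 1 -> is_derive (fun t => f x t) v (fy x v)) ->
  (forall x v, 0 <= x <= 1 -> m <= fy x v) -> (forall x v, 0 <= x <= 1 -> fy x v <= g) ->
  forall x u v, 0 <= x <= 1 -> v <= u -> m * (u - v) <= f x u - f x v <= g * (u - v).
Proof.
  intros Hd Hl Hh x u v Hx Huv.
  destruct (Req_dec u v) as [->|Hne].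
  { replace (v - v) with 0 by ring. lra. }
  destruct (mvt_open (fun t => f x t) (fy x) v u) as [c [Hc Heq]]; try lra.
  { intros t _; auto. }
  { intros t _; apply (cont_of_derive _ _ (fy x t)); auto. }
  specialize (Hl x c Hx); specialize (Hh x c Hx).
  rewrite Heq. split; apply Rmult_le_compat_r; lra.
Qed.

Lemma f_lipx (f fx : R -> R -> R) Kx M :
  (forall x v, 0 < x < 1 -> is_derive (fun t => f t v) x (fx x v)) ->
  (forall x w, 0 <= x <= 1 -> -M <= w <= M -> Rabs (fx x w) <= Kx) ->
  forall x1 x2 v, 0 < x1 < 1 -> 0 < x2 < 1 -> Rabs v <= M ->
  Rabs (f x1 v - f x2 v) <= Kx * Rabs (x1 - x2).
Proof.
  intros Hd HK.
  assert (H : forall x1 x2 v, 0 < x1 < 1 -> 0 < x2 < 1 -> Rabs v <= M -> x2 < x1 ->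
     Rabs (f x1 v - f x2 v) <= Kx * Rabs (x1 - x2)).
  { intros x1 x2 v H1 H2 Hv Hlt.
    destruct (mvt_open (fun t => f t v) (fun t => fx t v) x2 x1) as [c [Hc Heq]]; try lra.
    { intros t Ht; apply Hd; lra. }
    { intros t Ht; apply (cont_of_derive _ _ (fx t v)); apply Hd; lra. }
    rewrite Heq. rewrite Rabs_mult. apply Rmult_le_compat_r. apply Rabs_pos.
    apply HK. lra. apply abs_le_inv in Hv; lra. }
  intros x1 x2 v H1 H2 Hv.
  destruct (Rtotal_order x1 x2) as [Hlt|[Heq|Hgt]].
  - rewrite Rabs_minus_sym, (Rabs_minus_sym x1). apply H; auto.
  - subst. replace (x2 - x2) with 0 by ring. replace (f x2 v - f x2 v) with 0 by ring.
    rewrite Rabs_R0. lra.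
  - apply H; auto.
Qed.

Lemma mesh_vals eps m N q : N = (4 * q)%nat -> (1 <= q)%nat ->
  shishkin_mesh eps m N q = shishkin_lambda eps m N /\
  shishkin_mesh eps m N (q - 1) = shishkin_lambda eps m N - 4 * shishkin_lambda eps m N / INR N /\
  shishkin_mesh eps m N (q + 1) = shishkin_lambda eps m N + 2 * (1 - 2 * shishkin_lambda eps m N) / INR N.
Proof.
  intros HN Hq.
  assert (H4 : (N / 4 = q)%nat) by (subst; rewrite Nat.mul_comm; apply Nat.div_mul; lia).
  assert (H34 : (3 * N / 4 = 3 * q)%nat).
  { subst. replace (3 * (4 * q))%nat with (3 * q * 4)%nat by lia. apply Nat.div_mul; lia. }
  assert (HNr : INR N = 4 * INR q) by (subst; rewrite mult_INR; simpl; ring).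
  assert (Hqr : 0 < INR q) by (apply lt_0_INR; lia).
  unfold shishkin_mesh. cbv zeta. rewrite H4, H34.
  split; [|split].
  - rewrite Nat.leb_refl. rewrite HNr. field. lra.
  - replace ((q - 1 <=? q)%nat) with true by (symmetry; apply Nat.leb_le; lia).
    rewrite minus_INR by lia. simpl. rewrite HNr. field. lra.
  - replace ((q + 1 <=? q)%nat) with false by (symmetry; apply Nat.leb_gt; lia).
    replace ((q + 1 <=? 3 * q)%nat) with true by (symmetry; apply Nat.leb_le; lia).
    replace (q + 1 - q)%nat with 1%nat by lia. simpl. ring.
Qed.

Lemma hyp_id b s : 0 < s ->
  b / sinh s + b / tanh s = b * ((exp s + 1) / (exp s - 1)) /\
  b / tanh s - b / sinh s = b * ((exp s - 1) / (exp s + 1)).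
Proof.
  intros Hs. assert (Hu : 1 + s < exp s) by (apply exp_ineq1; lra).
  unfold tanh, sinh, cosh. rewrite exp_Ropp.
  set (u := exp s) in *.
  assert (u <> 0) by lra. assert (u - 1 <> 0) by lra. assert (u + 1 <> 0) by lra.
  assert (u - / u <> 0).
  { intro H3. assert (u * u = 1).
    { replace (u * u) with (u * (u - / u) + 1) by (field; auto). rewrite H3; ring. }
    nra. }
  assert (u + / u <> 0).
  { assert (0 < / u) by (apply Rinv_0_lt_compat; lra). lra. }
  split; field; repeat split; auto; nra.
Qed.

Lemma L_alg g b u1 u2 Ym Y0 Yp F1 F2 : 0 < g -> 0 < b -> 1 < u1 -> 1 < u2 ->
  g / (b * ((u1 - 1) / (u1 + 1)) + b * ((u2 - 1) / (u2 + 1))) *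
   (b * ((u1 + 1) / (u1 - 1)) / 2 * Ym
    - (b * ((u1 + 1) / (u1 - 1)) / 2 + b * ((u2 + 1) / (u2 - 1)) / 2) * Y0
    + b * ((u2 + 1) / (u2 - 1)) / 2 * Yp
    - b * ((u1 - 1) / (u1 + 1)) / g * F1 - b * ((u2 - 1) / (u2 + 1)) / g * F2)
  = g * (Ym - Y0) / (2 * ((u1 - 1) / (u1 + 1)) * ((u1 - 1) / (u1 + 1) + (u2 - 1) / (u2 + 1)))
    + g * (Yp - Y0) / (2 * ((u2 - 1) / (u2 + 1)) * ((u1 - 1) / (u1 + 1) + (u2 - 1) / (u2 + 1)))
    - ((u1 - 1) / (u1 + 1) * F1 + (u2 - 1) / (u2 + 1) * F2) / ((u1 - 1) / (u1 + 1) + (u2 - 1) / (u2 + 1)).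
Proof.
  intros Hg Hb H1 H2.
  assert (0 < (u1 - 1) / (u1 + 1)) by (apply Rdiv_lt_0_compat; lra).
  assert (0 < (u2 - 1) / (u2 + 1)) by (apply Rdiv_lt_0_compat; lra).
  field. repeat split; try lra.
  - assert (0 < (u1 - 1) * (u2 + 1)) by nra. assert (0 < (u2 - 1) * (u1 + 1)) by nra. lra.
  - assert (0 < b * (u1 - 1) * (u2 + 1)) by (apply Rmult_lt_0_compat; nra).
    assert (0 < b * (u2 - 1) * (u1 + 1)) by (apply Rmult_lt_0_compat; nra). lra.
Qed.

Lemma Fbound g T1 T2 tau DL DR F1 F2 Fm : 0 < g -> 0 < T1 -> 0 < tau -> tau <= T2 ->
  Rabs F1 <= Fm -> Rabs F2 <= Fm ->
  Rabs (g * DL / (2 * T1 * (T1 + T2)) + g * DR / (2 * T2 * (T1 + T2)) - (T1 * F1 + T2 * F2) / (T1 + T2))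
  <= g / (2 * tau) * (/ T1) * Rabs DL + g / (2 * tau * tau) * Rabs DR + Fm.
Proof.
  intros Hg HT1 Ht HT2 HF1 HF2.
  assert (HT2p : 0 < T2) by lra.
  unfold Rminus. eapply Rle_trans; [apply Rabs_triang|].
  rewrite Rabs_Ropp. apply Rplus_le_compat.
  eapply Rle_trans; [apply Rabs_triang|]. apply Rplus_le_compat.
  - replace (g * DL / (2 * T1 * (T1 + T2))) with (DL * (g / (2 * T1 * (T1 + T2)))) by (field; lra).
    rewrite Rabs_mult. rewrite (Rabs_right (g / _)).
    2: { left. apply Rdiv_lt_0_compat; [lra|]. apply Rmult_lt_0_compat; lra. }
    replace (g / (2 * tau) * / T1 * Rabs DL) with (Rabs DL * (g / (2 * T1 * tau))) by (field; lra).
    apply Rmult_le_compat_l; [apply Rabs_pos|].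
    unfold Rdiv. apply Rmult_le_compat_l; [lra|]. apply Rinv_le_contravar.
    + apply Rmult_lt_0_compat; lra.
    + apply Rmult_le_compat_l; lra.
  - replace (g * DR / (2 * T2 * (T1 + T2))) with (DR * (g / (2 * T2 * (T1 + T2)))) by (field; lra).
    rewrite Rabs_mult. rewrite (Rabs_right (g / _)).
    2: { left. apply Rdiv_lt_0_compat; [lra|]. apply Rmult_lt_0_compat; lra. }
    replace (g / (2 * tau * tau) * Rabs DR) with (Rabs DR * (g / (2 * tau * tau))) by (field; lra).
    apply Rmult_le_compat_l; [apply Rabs_pos|].
    unfold Rdiv. apply Rmult_le_compat_l; [lra|]. apply Rinv_le_contravar.
    + apply Rmult_lt_0_compat; lra.
    + apply Rmult_le_compat; nra.
  - unfold Rdiv. rewrite Rabs_mult. rewrite (Rabs_right (/ (T1 + T2))).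
    2: { left; apply Rinv_0_lt_compat; lra. }
    apply (Rmult_le_reg_r (T1 + T2)); [lra|].
    rewrite Rmult_assoc, Rinv_l by lra. rewrite Rmult_1_r.
    eapply Rle_trans; [apply Rabs_triang|]. rewrite !Rabs_mult.
    rewrite (Rabs_right T1), (Rabs_right T2) by lra. nra.
Qed.
Lemma lnN_ge1 N : (4 <= N)%nat -> 1 <= ln (INR N).
Proof.
  intros H. assert (4 <= INR N) by (replace 4 with (INR 4) by (simpl; ring); apply le_INR; lia).
  rewrite <- ln_exp with 1. apply ln_le. apply exp_pos. pose proof exp_le_3. lra.
Qed.

Lemma lnN_le N : (1 <= N)%nat -> ln (INR N) <= INR N.
Proof.
  intros H. assert (0 < INR N) by (apply lt_0_INR; lia).
  pose proof (exp_ineq1_le (ln (INR N))). rewrite exp_ln in H1; lra.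
Qed.

Lemma exp_bound sm eps lam h N t : 0 < sm -> 0 < eps -> (4 <= N)%nat ->
  lam = 2 * eps * ln (INR N) / sm -> h = 4 * lam / INR N -> lam - h <= t ->
  exp (- (sm / eps) * t + 0) <= exp 8 / (INR N * INR N).
Proof.
  intros Hsm He HN Hl Hh Ht.
  assert (HNr : 4 <= INR N) by (replace 4 with (INR 4) by (simpl; ring); apply le_INR; lia).
  pose proof (lnN_le N ltac:(lia)) as HLN. pose proof (lnN_ge1 N HN) as HL1.
  assert (Hk : sm / eps * (lam - h) = 2 * ln (INR N) - 8 * ln (INR N) / INR N).
  { rewrite Hh, Hl. field. lra. }
  assert (Hk2 : 8 * ln (INR N) / INR N <= 8).
  { apply (Rmult_le_reg_r (INR N)); [lra|]. unfold Rdiv. rewrite Rmult_assoc, Rinv_l by lra. nra. }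
  assert (Hske : 0 < sm / eps) by (apply Rdiv_lt_0_compat; lra).
  apply Rle_trans with (exp (8 + - (2 * ln (INR N)))).
  - destruct (Req_dec (- (sm / eps) * t + 0) (8 + - (2 * ln (INR N)))) as [E|E].
    + rewrite E; lra.
    + left. apply exp_increasing. nra.
  - rewrite exp_plus, exp_Ropp. replace (2 * ln (INR N)) with (ln (INR N) + ln (INR N)) by ring.
    rewrite exp_plus, exp_ln by lra. unfold Rdiv. lra.
Qed.

Ltac pos_tac := repeat match goal with
  | |- 0 <= _ + _ => apply Rplus_le_le_0_compat
  | |- 0 <= _ * _ => apply Rmult_le_pos
  | |- 0 <= _ / _ => apply Rdiv_le_0_compat
  end; try nra.

Theorem lemma2 (f fy : R -> R -> R) (m gamma C0 : R) :
  C2_strip f fy ->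
  0 < m ->
  (forall x v, 0 <= x <= 1 -> m <= fy x v) ->
  (forall x v, 0 <= x <= 1 -> fy x v <= gamma) ->
  0 < C0 ->
  exists C : R, 0 < C /\
    forall (eps : R) (N : nat) (y : R -> R),
      0 < eps ->
      (0 < N)%nat -> (N mod 4 = 0)%nat ->
      shishkin_lambda eps m N = 2 * eps * ln (INR N) / sqrt m ->
      eps <= C0 / INR N ->
      is_solution eps f y ->
      Rabs (F_op gamma eps f (shishkin_mesh eps m N) N
              (fun i => y (shishkin_mesh eps m N i)) (N / 4)%nat)
        <= C / INR N.
Proof.
  intros HC2 Hm Hlo Hhi HC0.
  destruct HC2 as [fx [fxx [fxy [fyx [fyy [Hcf [Hcfx [_ [_ [_ [_ [_ [Hdx Hdy]]]]]]]]]]]]].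
  assert (Hgm : m <= gamma) by (specialize (Hlo 0 0); specialize (Hhi 0 0); lra).
  assert (Hgp : 0 < gamma) by lra.
  assert (Hmono := f_mono f fy m gamma (fun x v Hx => proj1 (Hdy x v Hx)) Hlo Hhi).
  destruct (bounded_rect f Hcf 0 (Rle_refl 0)) as [Mf HMf].
  assert (HMf0 : forall x, 0 <= x <= 1 -> Rabs (f x 0) <= Mf) by (intros; apply HMf; lra).
  assert (Mfp : 0 <= Mf) by (specialize (HMf0 0 ltac:(lra)); pose proof (Rabs_pos (f 0 0)); lra).
  set (M0 := Mf / m).
  assert (M0p : 0 <= M0) by (apply Rdiv_le_0_compat; lra).
  destruct (bounded_rect fx Hcfx M0 M0p) as [Kx HKx].
  assert (Kxp : 0 <= Kx) by (specialize (HKx 0 0 ltac:(lra) ltac:(lra)); pose proof (Rabs_pos (fx 0 0)); lra).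
  assert (HLx := f_lipx f fx Kx M0 (fun x v Hx => proj1 (Hdx x v Hx)) HKx).
  set (C1 := Kx / m).
  assert (C1p : 0 <= C1) by (apply Rdiv_le_0_compat; lra).
  assert (sgp : 0 < sqrt gamma) by (apply sqrt_lt_R0; lra).
  assert (smp : 0 < sqrt m) by (apply sqrt_lt_R0; lra).
  set (b0 := sqrt gamma / C0). assert (b0p : 0 < b0) by (apply Rdiv_lt_0_compat; lra).
  set (tau := b0 / (2 + b0)). assert (taup : 0 < tau) by (apply Rdiv_lt_0_compat; lra).
  set (E8 := exp 8). assert (E8p : 0 < E8) by apply exp_pos.
  set (Cl := gamma / (2 * tau) * (C1 + 4 * M0 * E8 + C1 * (2 * C0 / sqrt gamma) + 4 * M0 * (E8 * sqrt m / (4 * sqrt gamma)))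
     + gamma / (2 * tau * tau) * (2 * C1 + 4 * M0 * E8)
     + (2 * C0 * C1 + 8 * M0 * E8 + 2 * C0 * Kx + gamma * (2 * C0 * C1 + 4 * M0 * E8)
        + gamma * (C1 + 4 * M0 * E8))).
  set (Ccr := gamma / (2 * tau) * (1 + sqrt m * (4 * C0 + 2) / (4 * sqrt gamma)) * (2 * M0)
     + gamma / (2 * tau * tau) * (2 * M0) + (Mf + gamma * M0)).
  assert (Clp : 0 <= Cl).
  { unfold Cl. pos_tac. }
  assert (Ccrp : 0 <= Ccr).
  { unfold Ccr. pos_tac. }
  exists (Cl + Ccr * (4 * C0 + 2) + 1). split; [nra|].
  intros eps N y He HN HN4 Hlam HeN Hsol.
  set (q := (N / 4)%nat).
  assert (HNq : N = (4 * q)%nat) by (unfold q; pose proof (Nat.div_mod N 4); lia).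
  assert (Hq1 : (1 <= q)%nat) by lia.
  assert (HN4' : (4 <= N)%nat) by lia.
  assert (HNr : 4 <= INR N) by (replace 4 with (INR 4) by (simpl; ring); apply le_INR; lia).
  destruct (mesh_vals eps m N q HNq Hq1) as [Mq [Mqm Mqp]].
  set (lam := shishkin_lambda eps m N) in *.
  assert (Hlam4 : lam <= 1/4) by (unfold lam, shishkin_lambda; apply Rmin_l).
  pose proof (lnN_ge1 N HN4') as HL1.
  assert (Hlamp : 0 < lam).
  { rewrite Hlam. apply Rdiv_lt_0_compat; [|lra]. apply Rmult_lt_0_compat; lra. }
  set (h := 4 * lam / INR N) in *. set (H := 2 * (1 - 2 * lam) / INR N) in *.
  destruct (sol_ode eps m f y Hsol Hm (fun x u v Hx Huv => proj1 (Hmono x u v Hx Huv)))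
    as [y1 [y2 [Hode Hy2]]].
  assert (Hy0 : y 0 = 0) by apply Hsol.
  assert (Hy1 : y 1 = 0) by apply Hsol.
  assert (Hyb' : forall x, 0 <= x <= 1 -> Rabs (y (clamp x)) <= M0).
  { intros x Hx. apply Rabs_le. split.
    - assert (HH := maxprin eps m _ _ _ _ Mf (neg_ode _ _ _ _ _ _ Hode) Hm He).
      simpl in HH.
      assert (- y (clamp x) <= Mf / m); [|unfold M0; lra].
      apply HH; auto.
      + rewrite clamp_id by lra. rewrite Hy0; ring.
      + rewrite clamp_id by lra. rewrite Hy1; ring.
      + intros t Ht. replace (- 0) with 0 by ring.
        specialize (HMf0 t ltac:(lra)). apply abs_le_inv in HMf0. lra.
    - apply (maxprin eps m _ _ _ _ Mf Hode Hm He); auto.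
      + rewrite clamp_id by lra. auto.
      + rewrite clamp_id by lra. auto.
      + intros t Ht. specialize (HMf0 t ltac:(lra)). apply abs_le_inv in HMf0. lra. }
  assert (Hyb : forall x, 0 <= x <= 1 -> Rabs (y x) <= M0).
  { intros x Hx. rewrite <- (clamp_id x Hx). auto. }
  assert (Hdq : forall d x, 0 < d < 1 -> 0 <= x <= 1 - d ->
     Rabs (y (x + d) - y x) <= d * C1 + 2 * M0 *
     (exp (- (sqrt m / eps) * x + 0) + exp ((sqrt m / eps) * x + - (sqrt m / eps) * (1 - d)))).
  { intros d x Hd Hx.
    pose proof (dq_abs eps m _ _ _ _ M0 Kx Hode Hm He Hyb' Kxp HLx d x Hd Hx) as HH. cbv beta in HH.
    rewrite (clamp_id (x + d)), (clamp_id x) in HH by lra. exact HH. }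
  assert (Hsd : forall s x, 0 < s -> 0 <= x -> x + 2 * s <= 1 ->
     exists z, x < z < x + 2 * s /\ eps ^ 2 * (y (x + 2 * s) - 2 * y (x + s) + y x) = s ^ 2 * f z (y z)).
  { intros s x Hs Hx Hx2.
    destruct (sec_diff eps m _ _ _ _ s x Hode Hs Hx Hx2) as [z [Hz Heq]]. cbv beta in Heq.
    exists z; split; auto.
    rewrite (clamp_id (x + 2 * s)), (clamp_id (x + s)), (clamp_id x) in Heq by lra.
    rewrite Heq, <- Hy2 by lra. ring. }
  assert (Hlipv : forall z u v, 0 <= z <= 1 -> Rabs (f z u - f z v) <= gamma * Rabs (u - v)).
  { intros z u v Hz. destruct (Rle_or_lt v u) as [Huv|Huv].
    - destruct (Hmono z u v Hz Huv). rewrite !Rabs_right by nra. nra.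
    - destruct (Hmono z v u Hz ltac:(lra)).
      rewrite (Rabs_minus_sym (f z u)), (Rabs_minus_sym u). rewrite !Rabs_right by nra. nra. }
  unfold F_op. cbv zeta.
  replace (q =? 0)%nat with false by (symmetry; apply Nat.eqb_neq; lia).
  replace (q =? N)%nat with false by (symmetry; apply Nat.eqb_neq; lia).
  replace (q + 1 - 1)%nat with q by lia.
  rewrite Mq, Mqm, Mqp.
  replace (lam - (lam - h)) with h by ring.
  replace (lam + H - lam) with H by ring.
  assert (Hhp : 0 < h) by (unfold h; apply Rdiv_lt_0_compat; lra).
  assert (HHp : 0 < H) by (unfold H; apply Rdiv_lt_0_compat; lra).
  set (b := sqrt gamma / eps).
  assert (bp : 0 < b) by (unfold b; apply Rdiv_lt_0_compat; lra).
  destruct (hyp_id b (b * h) ltac:(nra)) as [A1 B1].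
  destruct (hyp_id b (b * H) ltac:(nra)) as [A2 B2].
  rewrite A1, B1, A2, B2.
  set (u1 := exp (b * h)). set (u2 := exp (b * H)).
  assert (Hu1 : 1 + b * h < u1) by (apply exp_ineq1; nra).
  assert (Hu2 : 1 + b * H < u2) by (apply exp_ineq1; nra).
  rewrite L_alg by nra.
  set (T1 := (u1 - 1) / (u1 + 1)). set (T2 := (u2 - 1) / (u2 + 1)).
  assert (T1p : 0 < T1) by (unfold T1; apply Rdiv_lt_0_compat; nra).
  assert (HT1 : / T1 <= 1 + 2 / (b * h)).
  { unfold T1. rewrite Rinv_div.
    replace ((u1 + 1) / (u1 - 1)) with (1 + 2 / (u1 - 1)) by (field; nra).
    apply Rplus_le_compat_l. unfold Rdiv. apply Rmult_le_compat_l; [lra|].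
    apply Rinv_le_contravar; nra. }
  assert (HeN' : eps * INR N <= C0).
  { apply (Rmult_le_compat_r (INR N)) in HeN; [|lra]. unfold Rdiv in HeN.
    rewrite Rmult_assoc, Rinv_l in HeN by lra. lra. }
  assert (HbH : b0 <= b * H).
  { unfold b, H, b0.
    assert (1/2 <= 1 - 2 * lam) by lra.
    apply Rle_trans with (sqrt gamma / (eps * INR N)).
    - unfold Rdiv. apply Rmult_le_compat_l; [lra|]. apply Rinv_le_contravar; nra.
    - replace (sqrt gamma / eps * (2 * (1 - 2 * lam) / INR N)) with
        (sqrt gamma / (eps * INR N) * (2 * (1 - 2 * lam))) by (field; lra).
      assert (0 < sqrt gamma / (eps * INR N)) by (apply Rdiv_lt_0_compat; nra). nra. }
  assert (HT2 : tau <= T2).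
  { unfold tau, T2.
    replace (b0 / (2 + b0)) with (1 - 2 / (2 + b0)) by (field; lra).
    replace ((u2 - 1) / (u2 + 1)) with (1 - 2 / (u2 + 1)) by (field; nra).
    apply Rplus_le_compat_l, Ropp_le_contravar. unfold Rdiv. apply Rmult_le_compat_l; [lra|].
    apply Rinv_le_contravar; lra. }
  assert (HLN : ln (INR N) = lam * sqrt m / (2 * eps)) by (rewrite Hlam; field; lra).
  assert (Hr : 2 / (b * h) = INR N * sqrt m / (4 * sqrt gamma * ln (INR N))).
  { rewrite HLN. unfold b, h. field. repeat split; lra. }
  assert (Hr0 : 0 <= 2 / (b * h)) by (apply Rdiv_le_0_compat; nra).
  assert (Hr1 : 2 / (b * h) <= INR N * sqrt m / (4 * sqrt gamma)).
  { rewrite Hr. unfold Rdiv. apply Rmult_le_compat_l; [nra|].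
    apply Rinv_le_contravar; nra. }
  assert (Hh1 : h <= 1 / INR N) by (unfold h; unfold Rdiv; apply Rmult_le_compat_r; [left; apply Rinv_0_lt_compat|]; lra).
  assert (HH1 : H <= 2 / INR N) by (unfold H; unfold Rdiv; apply Rmult_le_compat_r; [left; apply Rinv_0_lt_compat|]; lra).
  assert (HiN : 1 / INR N <= 1 / 4).
  { unfold Rdiv. rewrite !Rmult_1_l. apply Rinv_le_contravar; lra. }
  assert (Hhl : h <= lam).
  { unfold h. apply (Rmult_le_reg_r (INR N)); [lra|]. unfold Rdiv.
    rewrite Rmult_assoc, Rinv_l by lra. nra. }
  assert (Hfin : forall X, X * INR N <= Cl + Ccr * (4 * C0 + 2) + 1 ->
            X <= (Cl + Ccr * (4 * C0 + 2) + 1) / INR N).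
  { intros X HX. apply (Rmult_le_reg_r (INR N)); [lra|]. unfold Rdiv.
    rewrite Rmult_assoc, Rinv_l by lra. lra. }
  destruct (Rlt_or_le (INR N) (4 * C0 + 2)) as [Hsmall|Hlarge].
  -
    set (Fm := Mf + gamma * M0).
    assert (HFx : forall x a c, 0 <= x <= 1 -> 0 <= a <= 1 -> 0 <= c <= 1 ->
               Rabs (f x ((y a + y c) / 2)) <= Fm).
    { intros x a c Hx Ha Hc.
      pose proof (Hlipv x ((y a + y c) / 2) 0 Hx) as HH.
      pose proof (HMf0 x Hx). pose proof (Hyb a Ha). pose proof (Hyb c Hc).
      assert (Rabs ((y a + y c) / 2 - 0) <= M0).
      { apply abs_le_inv in H1; apply abs_le_inv in H2. apply Rabs_le. lra. }
      replace (f x ((y a + y c) / 2)) with ((f x ((y a + y c) / 2) - f x 0) + f x 0) by ring.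
      eapply Rle_trans; [apply Rabs_triang|]. unfold Fm. nra. }
    eapply Rle_trans; [apply (Fbound gamma T1 T2 tau _ _ _ _ Fm); auto|].
    + apply HFx; lra.
    + apply HFx; lra.
    + apply Hfin.
      assert (HdL : Rabs (y (lam - h) - y lam) <= 2 * M0).
      { pose proof (Hyb (lam - h) ltac:(lra)). pose proof (Hyb lam ltac:(lra)).
        apply abs_le_inv in H0; apply abs_le_inv in H1. apply Rabs_le. lra. }
      assert (HdR : Rabs (y (lam + H) - y lam) <= 2 * M0).
      { pose proof (Hyb (lam + H) ltac:(lra)). pose proof (Hyb lam ltac:(lra)).
        apply abs_le_inv in H0; apply abs_le_inv in H1. apply Rabs_le. lra. }
      assert (HR : / T1 <= 1 + sqrt m * (4 * C0 + 2) / (4 * sqrt gamma)).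
      { apply Rle_trans with (1 + 2 / (b * h)); auto. apply Rplus_le_compat_l.
        apply Rle_trans with (INR N * sqrt m / (4 * sqrt gamma)); auto.
        unfold Rdiv. apply Rmult_le_compat_r; [left; apply Rinv_0_lt_compat; lra|]. nra. }
      assert (HiT1 : 0 <= / T1) by (left; apply Rinv_0_lt_compat; lra).
      assert (Hg2t : 0 <= gamma / (2 * tau)) by (apply Rdiv_le_0_compat; lra).
      assert (Hg2tt : 0 <= gamma / (2 * tau * tau)) by (apply Rdiv_le_0_compat; nra).
      assert (HX : gamma / (2 * tau) * / T1 * Rabs (y (lam - h) - y lam) +
                   gamma / (2 * tau * tau) * Rabs (y (lam + H) - y lam) + Fm <= Ccr).
      { unfold Ccr. apply Rplus_le_compat_r. apply Rplus_le_compat.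
        - rewrite Rmult_assoc, (Rmult_assoc (gamma / (2 * tau))).
          apply Rmult_le_compat_l; auto. apply Rmult_le_compat; auto. apply Rabs_pos.
        - apply Rmult_le_compat_l; auto. }
      assert (0 <= gamma / (2 * tau) * / T1 * Rabs (y (lam - h) - y lam) +
                   gamma / (2 * tau * tau) * Rabs (y (lam + H) - y lam) + Fm).
      { pose proof (Rabs_pos (y (lam - h) - y lam)). pose proof (Rabs_pos (y (lam + H) - y lam)).
        unfold Fm. pos_tac. }
      nra.
  -
    assert (Heps4 : eps <= 1 / 4).
    { assert (eps * (4 * C0 + 2) <= eps * INR N) by (apply Rmult_le_compat_l; lra). nra. }
    assert (Hsum : 1 / INR N + 2 * eps <= 1 / 2).
    { apply (Rmult_le_reg_r (INR N)); [lra|].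
      replace ((1 / INR N + 2 * eps) * INR N) with (1 + 2 * (eps * INR N)) by (field; lra). lra. }
    set (P := E8 / (INR N * INR N)).
    assert (Pp : 0 <= P) by (unfold P; apply Rdiv_le_0_compat; nra).
    assert (HexpP : forall t, lam - h <= t -> exp (- (sqrt m / eps) * t + 0) <= P).
    { intros t Ht. unfold P, E8. apply (exp_bound (sqrt m) eps lam h N t); auto. }
    assert (HdqP : forall d x, 0 < d < 1 -> 0 <= x -> lam - h <= x -> x + d <= 1 - (lam - h) ->
              Rabs (y (x + d) - y x) <= d * C1 + 4 * M0 * P).
    { intros d x Hd Hx0 Hx1 Hx2. eapply Rle_trans; [apply Hdq; lra|].
      pose proof (HexpP x Hx1).
      replace (exp (sqrt m / eps * x + - (sqrt m / eps) * (1 - d))) with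
        (exp (- (sqrt m / eps) * (1 - d - x) + 0)) by (f_equal; ring).
      pose proof (HexpP (1 - d - x) ltac:(lra)). nra. }
    set (Fb := 2 * eps * C1 + 8 * M0 * P + 2 * eps * Kx + gamma * (2 * eps * C1 + 4 * M0 * P)).
    assert (Hfb : forall x, 0 < x -> lam - h <= x -> x + 2 * eps <= 1 - (lam - h) ->
              Rabs (f x (y x)) <= Fb).
    { intros x Hx0 Hx1 Hx2.
      destruct (Hsd eps x He ltac:(lra) ltac:(lra)) as [z [Hz Heq]].
      assert (Hfz : f z (y z) = y (x + 2 * eps) - 2 * y (x + eps) + y x).
      { apply (Rmult_eq_reg_l (eps ^ 2)). rewrite Heq; ring. apply pow_nonzero; lra. }
      assert (D1 : Rabs (y (x + 2 * eps) - y (x + eps)) <= eps * C1 + 4 * M0 * P).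
      { replace (x + 2 * eps) with (x + eps + eps) by ring. apply HdqP; lra. }
      assert (D2 : Rabs (y (x + eps) - y x) <= eps * C1 + 4 * M0 * P) by (apply HdqP; lra).
      assert (D3 : Rabs (y z - y x) <= (z - x) * C1 + 4 * M0 * P).
      { replace z with (x + (z - x)) at 1 by ring. apply HdqP; lra. }
      assert (L1 : Rabs (f x (y x) - f z (y x)) <= Kx * Rabs (x - z)).
      { apply HLx; try lra. apply Hyb; lra. }
      rewrite (Rabs_minus_sym x z), (Rabs_right (z - x)) in L1 by lra.
      assert (L2 : Rabs (f z (y x) - f z (y z)) <= gamma * Rabs (y x - y z)) by (apply Hlipv; lra).
      rewrite Rabs_minus_sym in D3. 
      replace (f x (y x)) with ((f x (y x) - f z (y x)) + (f z (y x) - f z (y z)) + f z (y z)) by ring.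
      eapply Rle_trans; [apply Rabs_triang|].
      eapply Rle_trans; [apply Rplus_le_compat_r; apply Rabs_triang|].
      assert (Rabs (f z (y z)) <= 2 * (eps * C1 + 4 * M0 * P)).
      { rewrite Hfz. replace (y (x + 2 * eps) - 2 * y (x + eps) + y x) with
          ((y (x + 2 * eps) - y (x + eps)) + (y x - y (x + eps))) by ring.
        eapply Rle_trans; [apply Rabs_triang|]. rewrite (Rabs_minus_sym (y x)). lra. }
      assert (gamma * Rabs (y x - y z) <= gamma * (2 * eps * C1 + 4 * M0 * P)).
      { apply Rmult_le_compat_l; [lra|]. nra. }
      assert (Kx * (z - x) <= Kx * (2 * eps)) by (apply Rmult_le_compat_l; lra).
      unfold Fb. lra. }
    set (Fm := Fb + gamma * (1 / INR N * C1 + 4 * M0 * P)).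
    assert (Hlh0 : 0 <= lam - h) by lra.
    assert (HiN2 : h / 2 <= 1 / INR N) by lra.
    assert (HiN3 : H / 2 <= 1 / INR N) by lra.
    assert (HF1 : Rabs (f ((lam - h + lam) / 2) ((y (lam - h) + y lam) / 2)) <= Fm).
    { set (m1 := (lam - h + lam) / 2).
      assert (E1 : Rabs (y m1 - y (lam - h)) <= h / 2 * C1 + 4 * M0 * P).
      { replace m1 with (lam - h + h / 2) by (unfold m1; field). apply HdqP; lra. }
      assert (E2 : Rabs (y lam - y m1) <= h / 2 * C1 + 4 * M0 * P).
      { replace lam with (m1 + h / 2) at 1 by (unfold m1; field). apply HdqP; unfold m1; lra. }
      assert (E3 : Rabs ((y (lam - h) + y lam) / 2 - y m1) <= 1 / INR N * C1 + 4 * M0 * P).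
      { apply abs_le_inv in E1; apply abs_le_inv in E2. apply Rabs_le.
        assert (h / 2 * C1 <= 1 / INR N * C1) by (apply Rmult_le_compat_r; lra). lra. }
      assert (E4 : Rabs (f m1 (y m1)) <= Fb) by (apply Hfb; unfold m1; lra).
      pose proof (Hlipv m1 ((y (lam - h) + y lam) / 2) (y m1) ltac:(unfold m1; lra)) as E5.
      replace (f m1 ((y (lam - h) + y lam) / 2)) with
        ((f m1 ((y (lam - h) + y lam) / 2) - f m1 (y m1)) + f m1 (y m1)) by ring.
      eapply Rle_trans; [apply Rabs_triang|].
      assert (gamma * Rabs ((y (lam - h) + y lam) / 2 - y m1) <= gamma * (1 / INR N * C1 + 4 * M0 * P))
        by (apply Rmult_le_compat_l; lra).
      unfold Fm. lra. }
    assert (HF2 : Rabs (f ((lam + (lam + H)) / 2) ((y lam + y (lam + H)) / 2)) <= Fm).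
    { set (m2 := (lam + (lam + H)) / 2).
      assert (E1 : Rabs (y m2 - y lam) <= H / 2 * C1 + 4 * M0 * P).
      { replace m2 with (lam + H / 2) by (unfold m2; field). apply HdqP; lra. }
      assert (E2 : Rabs (y (lam + H) - y m2) <= H / 2 * C1 + 4 * M0 * P).
      { replace (lam + H) with (m2 + H / 2) at 1 by (unfold m2; field). apply HdqP; unfold m2; lra. }
      assert (E3 : Rabs ((y lam + y (lam + H)) / 2 - y m2) <= 1 / INR N * C1 + 4 * M0 * P).
      { apply abs_le_inv in E1; apply abs_le_inv in E2. apply Rabs_le.
        assert (H / 2 * C1 <= 1 / INR N * C1) by (apply Rmult_le_compat_r; lra). lra. }
      assert (E4 : Rabs (f m2 (y m2)) <= Fb) by (apply Hfb; unfold m2; lra).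
      pose proof (Hlipv m2 ((y lam + y (lam + H)) / 2) (y m2) ltac:(unfold m2; lra)) as E5.
      replace (f m2 ((y lam + y (lam + H)) / 2)) with
        ((f m2 ((y lam + y (lam + H)) / 2) - f m2 (y m2)) + f m2 (y m2)) by ring.
      eapply Rle_trans; [apply Rabs_triang|].
      assert (gamma * Rabs ((y lam + y (lam + H)) / 2 - y m2) <= gamma * (1 / INR N * C1 + 4 * M0 * P))
        by (apply Rmult_le_compat_l; lra).
      unfold Fm. lra. }
    assert (HdL : Rabs (y (lam - h) - y lam) <= h * C1 + 4 * M0 * P).
    { rewrite Rabs_minus_sym. replace lam with (lam - h + h) at 1 by ring. apply HdqP; lra. }
    assert (HdR : Rabs (y (lam + H) - y lam) <= H * C1 + 4 * M0 * P) by (apply HdqP; lra).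
    eapply Rle_trans; [apply (Fbound gamma T1 T2 tau _ _ _ _ Fm); auto|].
    apply Hfin.
    set (r := 2 / (b * h)) in *.
    set (DL := Rabs (y (lam - h) - y lam)) in *.
    set (DR := Rabs (y (lam + H) - y lam)) in *.
    assert (DLp : 0 <= DL) by apply Rabs_pos.
    assert (DRp : 0 <= DR) by apply Rabs_pos.
    assert (HiT1 : 0 <= / T1) by (left; apply Rinv_0_lt_compat; lra).
    assert (A : / T1 * DL <= (1 + r) * (h * C1 + 4 * M0 * P)) by (apply Rmult_le_compat; auto).
    assert (Q1 : INR N * h = 4 * lam) by (unfold h; field; lra).
    assert (Q2 : INR N * P = E8 / INR N) by (unfold P; field; lra).
    assert (Q3 : r * h * INR N = 2 * (eps * INR N) / sqrt gamma).
    { unfold r, b. field. repeat split; lra. }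
    assert (Q4 : r * P * INR N = E8 * sqrt m / (4 * sqrt gamma * ln (INR N))).
    { rewrite Hr. unfold P. field. repeat split; lra. }
    set (nP := E8 / INR N) in *.
    assert (nPb : 0 <= nP <= E8).
    { unfold nP. split. apply Rdiv_le_0_compat; lra.
      apply (Rmult_le_reg_r (INR N)); [lra|]. unfold Rdiv.
      rewrite Rmult_assoc, Rinv_l by lra. nra. }
    set (eN := eps * INR N) in *.
    assert (eNb : 0 <= eN <= C0) by (split; [unfold eN; nra|lra]).
    assert (B3 : 2 * eN / sqrt gamma <= 2 * C0 / sqrt gamma).
    { unfold Rdiv. apply Rmult_le_compat_r; [left; apply Rinv_0_lt_compat; lra|lra]. }
    assert (B4 : E8 * sqrt m / (4 * sqrt gamma * ln (INR N)) <= E8 * sqrt m / (4 * sqrt gamma)).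
    { unfold Rdiv. apply Rmult_le_compat_l; [nra|]. apply Rinv_le_contravar; nra. }
    assert (B4p : 0 <= E8 * sqrt m / (4 * sqrt gamma * ln (INR N))).
    { apply Rdiv_le_0_compat; nra. }
    assert (B3p : 0 <= 2 * eN / sqrt gamma) by (apply Rdiv_le_0_compat; lra).
    assert (I1 : / T1 * DL * INR N <= C1 + 4 * M0 * E8 + C1 * (2 * C0 / sqrt gamma)
                   + 4 * M0 * (E8 * sqrt m / (4 * sqrt gamma))).
    { apply Rle_trans with ((1 + r) * (h * C1 + 4 * M0 * P) * INR N).
      { apply Rmult_le_compat_r; lra. }
      replace ((1 + r) * (h * C1 + 4 * M0 * P) * INR N) with
        (C1 * (INR N * h) + 4 * M0 * (INR N * P) + C1 * (r * h * INR N) + 4 * M0 * (r * P * INR N))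
        by ring.
      rewrite Q1, Q2, Q3, Q4.
      assert (C1 * (4 * lam) <= C1 * 1) by (apply Rmult_le_compat_l; lra).
      assert (4 * M0 * nP <= 4 * M0 * E8) by (apply Rmult_le_compat_l; lra).
      assert (C1 * (2 * eN / sqrt gamma) <= C1 * (2 * C0 / sqrt gamma)) by (apply Rmult_le_compat_l; lra).
      assert (4 * M0 * (E8 * sqrt m / (4 * sqrt gamma * ln (INR N))) <=
              4 * M0 * (E8 * sqrt m / (4 * sqrt gamma))) by (apply Rmult_le_compat_l; lra).
      lra. }
    assert (I2 : DR * INR N <= 2 * C1 + 4 * M0 * E8).
    { apply Rle_trans with ((H * C1 + 4 * M0 * P) * INR N).
      { apply Rmult_le_compat_r; lra. }
      replace ((H * C1 + 4 * M0 * P) * INR N) with (C1 * (INR N * H) + 4 * M0 * (INR N * P)) by ring.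
      rewrite Q2. replace (INR N * H) with (2 * (1 - 2 * lam)) by (unfold H; field; lra).
      assert (C1 * (2 * (1 - 2 * lam)) <= C1 * 2) by (apply Rmult_le_compat_l; lra).
      assert (4 * M0 * nP <= 4 * M0 * E8) by (apply Rmult_le_compat_l; lra).
      lra. }
    assert (I3 : Fm * INR N <= 2 * C0 * C1 + 8 * M0 * E8 + 2 * C0 * Kx
                   + gamma * (2 * C0 * C1 + 4 * M0 * E8) + gamma * (C1 + 4 * M0 * E8)).
    { unfold Fm, Fb.
      replace ((2 * eps * C1 + 8 * M0 * P + 2 * eps * Kx + gamma * (2 * eps * C1 + 4 * M0 * P) +
                gamma * (1 / INR N * C1 + 4 * M0 * P)) * INR N) with
        (2 * eN * C1 + 8 * M0 * (INR N * P) + 2 * eN * Kx + gamma * (2 * eN * C1 + 4 * M0 * (INR N * P))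
         + gamma * (C1 + 4 * M0 * (INR N * P))) by (unfold eN; field; lra).
      rewrite Q2.
      assert (eN * C1 <= C0 * C1) by (apply Rmult_le_compat_r; lra).
      assert (eN * Kx <= C0 * Kx) by (apply Rmult_le_compat_r; lra).
      assert (M0 * nP <= M0 * E8) by (apply Rmult_le_compat_l; lra).
      assert (gamma * (2 * eN * C1 + 4 * M0 * nP) <= gamma * (2 * C0 * C1 + 4 * M0 * E8))
        by (apply Rmult_le_compat_l; lra).
      assert (gamma * (C1 + 4 * M0 * nP) <= gamma * (C1 + 4 * M0 * E8))
        by (apply Rmult_le_compat_l; lra).
      lra. }
    assert (Hg2t : 0 <= gamma / (2 * tau)) by (apply Rdiv_le_0_compat; lra).
    assert (Hg2tt : 0 <= gamma / (2 * tau * tau)) by (apply Rdiv_le_0_compat; nra).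
    replace ((gamma / (2 * tau) * / T1 * DL + gamma / (2 * tau * tau) * DR + Fm) * INR N) with
      (gamma / (2 * tau) * (/ T1 * DL * INR N) + gamma / (2 * tau * tau) * (DR * INR N) + Fm * INR N)
      by ring.
    assert (gamma / (2 * tau) * (/ T1 * DL * INR N) <= gamma / (2 * tau) *
      (C1 + 4 * M0 * E8 + C1 * (2 * C0 / sqrt gamma) + 4 * M0 * (E8 * sqrt m / (4 * sqrt gamma))))
      by (apply Rmult_le_compat_l; lra).
    assert (gamma / (2 * tau * tau) * (DR * INR N) <= gamma / (2 * tau * tau) * (2 * C1 + 4 * M0 * E8))
      by (apply Rmult_le_compat_l; lra).
    assert (0 <= Ccr * (4 * C0 + 2)) by nra.
    unfold Cl. lra.
Qed.
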